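(* Let $A=(a_n)_{n=1}^N$ and $B=(b_n)_{n=1}^{N'}$ be elements of $\mathcal A_1$, and let $\{\mathcal P_n\}_{n=1}^N$, $\{\mathcal Q_n\}_{n=1}^{N'}$ be sequences of pyramids. Then for any integer $M\in[\min\{N,N'\}]$, $$\rho\Big(\sum_{n=1}^N\mathcal P_n^{a_n},\sum_{n=1}^{N'}\mathcal Q_n^{b_n}\Big)\le\sum_{n=1}^M\rho(\mathcal P_n,\mathcal Q_n)+\frac12\|A-B\|_1+\frac12\sum_{n=M+1}^N a_n+\frac12\sum_{n=M+1}^{N'}b_n.$$
   Context: An mm-space is a triple $(X,d_X,\mu_X)$ with $(X,d_X)$ complete separable metric and $\mu_X$ a Borel probability measure; $\mathcal X$ is the set of mm-isomorphism classes. $Y\prec X$ means there is a 1-Lipschitz $f:X\to Y$ with $f_*\mu_X=\mu_Y$. The box distance $\square(X,Y)$ is the infimum of $\max\{\operatorname{dis}(S),1-\pi(S)\}$ over couplings $\pi$ of $\mu_X,\mu_Y$ and Borel $S\subset X\times Y$, $\operatorname{dis}(S)=\sup\{|d_X(x,x')-d_Y(y,y')|:(x,y),(x',y')\in S\}$. A pyramid is a nonempty box-closed subset of $\mathcal X$ closed downward under $\prec$ and directed. $\overline{\mathbb N}=\mathbb N\cup\{\infty\}$, $[N]=\{1,\dots,N\}$ or $\mathbb N$. $\mathcal A_1$: sequences $(a_n)_{n=1}^N$, $N\in\overline{\mathbb N}$, with $a_n\in(0,1]$, $\sum a_n=1$. Direct sum $\sum_{n=1}^N\mathcal P_n^{a_n}$: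 set of $X\in\mathcal X$ admitting $X_n\in\mathcal P_n$ and 1-Lipschitz $f_n:X_n\to X$ with $\mu_X=\sum_na_n(f_n)_*\mu_{X_n}$. For $A=(a_n)_{n=1}^N$, $B=(b_n)_{n=1}^{N'}$, $\|A-B\|_1=\sum_{n\le\min(N,N')}|a_n-b_n|+\sum_{n>\min(N,N')}(\text{remaining terms of the longer sequence})$, i.e. the $\ell^1$ distance after padding the shorter sequence with zeros. For a pyramid $\mathcal P$ and $k\in\mathbb N$, $\mathcal M(\mathcal P;k,k)$ is the set of Borel probability measures $\mu$ on $\mathbb R^k$ supported in $B^k_k=\{x:\|x\|_\infty\le k\}$ such that $(B^k_k,\|\cdot\|_\infty,\mu)\in\mathcal P$. The metric $\rho$ on pyramids is $\rho(\mathcal P,\mathcal Q)=\sum_{k=1}^\infty\frac{1}{2^k}\cdot\frac{1}{2k}(d_{\mathrm P})_{\mathrm H}(\mathcal M(\mathcal P;k,k),\mathcal M(\mathcal Q;k,k))$, where $d_{\mathrm P}$ is the Prokhorov distance on Borel probability measures on $(\mathbb R^k,\|\cdot\|_\infty)$ ($d_{\mathrm P}(\mu,\nu)=\inf\{\varepsilon>0:\mu(U_\varepsilon(A))\ge\nu(A)-\varepsilon\ \forall A\text{ Borel}\}$, $U_\varepsilon$ the open $\varepsilon$-neighborhood) and $(d_{\mathrm P})_{\mathrm H}$ the associated Hausdorff distance. *)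

(* Defs.v *)
From HB Require Import structures.
From mathcomp Require Import all_boot all_order all_algebra.
From mathcomp Require Import all_classical all_reals all_analysis.
Set Implicit Arguments. Unset Strict Implicit. Unset Printing Implicit Defensive.
Import Order.TTheory GRing.Theory Num.Theory numFieldNormedType.Exports.
Local Open Scope classical_set_scope.
Local Open Scope ring_scope.

(* Raw data of a (possible) mm-space: a carrier, a distance, and a set function
   (the measure; only its values on Borel sets are meaningful). *)
Record mms (R : realType) := MMS {
  mm_carrier : Type;
  mm_dist : mm_carrier -> mm_carrier -> R;
  mm_meas : set mm_carrier -> R }.
Arguments MMS {R mm_carrier}.
Arguments mm_carrier {R} m.
Arguments mm_dist {R} m _ _.
Arguments mm_meas {R} m _.

Definition is_open_d {R : realType} {T : Type} (d : T -> T -> R) (U : set T) :=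
  forall x, U x -> exists2 r : R, 0 < r & forall y, d x y < r -> U y.

Definition borel_d {R : realType} {T : Type} (d : T -> T -> R) : set (set T) :=
  <<s [set U | is_open_d d U] >>.

Definition is_metric {R : realType} {T : Type} (d : T -> T -> R) :=
  (forall x y, 0 <= d x y) /\ (forall x y, d x y = 0 <-> x = y) /\
  (forall x y, d x y = d y x) /\ (forall x y z, d x z <= d x y + d y z).

Definition is_complete_d {R : realType} {T : Type} (d : T -> T -> R) :=
  forall u : nat -> T,
    (forall e : R, 0 < e -> exists N, forall m n, (N <= m)%N -> (N <= n)%N ->
        d (u m) (u n) < e) ->
    exists x, forall e : R, 0 < e -> exists N, forall n, (N <= n)%N -> d (u n) x < e.

Definition is_separable_d {R : realType} {T : Type} (d : T -> T -> R) :=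
  exists s : nat -> T, forall x (e : R), 0 < e -> exists n, d x (s n) < e.

Definition is_prob_on {R : realType} {T : Type} (B : set (set T)) (mu : set T -> R) :=
  mu setT = 1 /\ (forall A, B A -> 0 <= mu A) /\
  (forall F : nat -> set T, (forall n, B (F n)) -> trivIset setT F ->
     (fun n : nat => \sum_(i < n) mu (F i) : R) @ \oo --> (mu (\bigcup_n F n) : R)).

Definition is_mmspace {R : realType} (X : mms R) :=
  is_metric (mm_dist X) /\ is_complete_d (mm_dist X) /\ is_separable_d (mm_dist X) /\
  is_prob_on (borel_d (mm_dist X)) (mm_meas X).

Definition lip1 {R : realType} {T U : Type} (dT : T -> T -> R) (dU : U -> U -> R)
  (f : T -> U) := forall x x', dU (f x) (f x') <= dT x x'.

(* dominates X Y  :=  Y \prec X *)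
Definition dominates {R : realType} (X Y : mms R) :=
  exists f : mm_carrier X -> mm_carrier Y, lip1 (mm_dist X) (mm_dist Y) f /\
    forall A, borel_d (mm_dist Y) A -> mm_meas X (f @^-1` A) = mm_meas Y A.

Definition prod_dist {R : realType} {T U : Type} (dT : T -> T -> R) (dU : U -> U -> R)
  (p q : T * U) : R := Num.max (dT p.1 q.1) (dU p.2 q.2).

Definition dis {R : realType} {T U : Type} (dT : T -> T -> R) (dU : U -> U -> R)
  (S : set (T * U)) : \bar R :=
  ereal_sup [set r | exists p q, S p /\ S q /\
                     r = (`|dT p.1 q.1 - dU p.2 q.2|)%:E].

Definition coupling {R : realType} (X Y : mms R)
  (pi : set (mm_carrier X * mm_carrier Y) -> R) :=
  is_prob_on (borel_d (prod_dist (mm_dist X) (mm_dist Y))) pi /\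
  (forall A, borel_d (mm_dist X) A -> pi (A `*` setT) = mm_meas X A) /\
  (forall B, borel_d (mm_dist Y) B -> pi (setT `*` B) = mm_meas Y B).

Definition box {R : realType} (X Y : mms R) : \bar R :=
  ereal_inf [set e | exists pi S, coupling pi /\
     borel_d (prod_dist (mm_dist X) (mm_dist Y)) S /\
     e = Order.max (dis (mm_dist X) (mm_dist Y) S) ((1 - pi S)%:E)].

Definition pyramid {R : realType} (P : mms R -> Prop) :=
  (forall X, P X -> is_mmspace X) /\
  (exists X, P X) /\
  (forall X Y, P X -> is_mmspace Y -> dominates X Y -> P Y) /\
  (forall X Y, P X -> P Y -> exists Z, P Z /\ dominates Z X /\ dominates Z Y) /\
  (forall (Xs : nat -> mms R) (X : mms R), (forall n, P (Xs n)) -> is_mmspace X ->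
     (forall e : R, 0 < e -> exists m, forall n, (m <= n)%N -> (box (Xs n) X < e%:E)%E) ->
     P X).

(* ---------- index sets [N], N in N-bar = option nat (None = infinity) ---------- *)

Definition in_idx (N : option nat) (n : nat) : bool :=
  (0 < n)%N && (if N is Some m then (n <= m)%N else true).

Definition pad {R : realType} (N : option nat) (a : nat -> R) (n : nat) : R :=
  if in_idx N n then a n else 0.

Definition rseries {R : realType} (u : nat -> R) (m : nat) : R :=
  limn (fun n => \sum_(m <= i < n) u i).

Definition inA1 {R : realType} (N : option nat) (a : nat -> R) :=
  (forall n, in_idx N n -> 0 < a n <= 1) /\
  (fun n : nat => \sum_(1 <= i < n) pad N a i : R) @ \oo --> (1 : R).

Definition l1dist {R : realType} (N : option nat) (a : nat -> R)
  (N' : option nat) (b : nat -> R) : R :=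
  rseries (fun n => `|pad N a n - pad N' b n|) 1.

Definition dsum {R : realType} (N : option nat) (a : nat -> R)
  (P : nat -> mms R -> Prop) (X : mms R) : Prop :=
  is_mmspace X /\
  exists (Xs : nat -> mms R) (f : forall n, mm_carrier (Xs n) -> mm_carrier X),
    (forall n, in_idx N n -> P n (Xs n) /\ lip1 (mm_dist (Xs n)) (mm_dist X) (f n)) /\
    forall A, borel_d (mm_dist X) A ->
      (fun m : nat => \sum_(1 <= n < m) pad N a n * mm_meas (Xs n) (f n @^-1` A) : R)
        @ \oo --> (mm_meas X A : R).

Definition linf {R : realType} (k : nat) (x y : 'I_k -> R) : R :=
  \big[Num.max/0]_(i < k) `|x i - y i|.
Arguments linf {R} k x y.

Definition cube_set {R : realType} (k : nat) : set ('I_k -> R) :=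
  [set x | linf k x (fun _ => 0) <= k%:R].

Arguments cube_set {R} k.

Definition cube (R : realType) (k : nat) :=
  {x : 'I_k -> R | linf k x (fun _ => 0) <= k%:R}.

Definition cube_mms {R : realType} (k : nat) (mu : set ('I_k -> R) -> R) : mms R :=
  @MMS R (cube R k) (fun x y => linf k (sval x) (sval y)) (fun A => mu (sval @` A)).

Arguments cube_mms {R} k mu.

Definition Mset {R : realType} (P : mms R -> Prop) (k : nat) : set (set ('I_k -> R) -> R) :=
  [set mu | is_prob_on (borel_d (linf k)) mu /\ mu (~` cube_set k) = 0 /\
            P (cube_mms k mu)].

Arguments Mset {R} P k.

Definition prokhorov {R : realType} (k : nat) (mu nu : set ('I_k -> R) -> R) : R :=
  inf [set e : R | 0 < e /\ forall A, borel_d (linf k) A ->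
         nu A - e <= mu [set x | exists2 y, A y & linf k x y < e]].
Arguments prokhorov {R} k mu nu.

Definition hausdorff {R : realType} {M : Type} (D : M -> M -> R) (S T : set M) : R :=
  Num.max (sup [set r | exists2 x, S x & r = inf [set s | exists2 y, T y & s = D x y]])
          (sup [set r | exists2 y, T y & r = inf [set s | exists2 x, S x & s = D x y]]).

Definition rho {R : realType} (P Q : mms R -> Prop) : R :=
  rseries (fun k => (2 ^- k) * (k.*2%:R)^-1 *
                    hausdorff (@prokhorov R k) (Mset P k) (Mset Q k)) 1.

(* Main.v *)
Require Import Defs.
From HB Require Import structures.
From mathcomp Require Import all_boot all_order all_algebra.
From mathcomp Require Import all_classical all_reals all_analysis.
From mathcomp Require Import ring lra.
Import Order.TTheory GRing.Theory Num.Theory numFieldNormedType.Exports.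
Local Open Scope ring_scope.
Local Open Scope classical_set_scope.

Section Borel.
Variables (R : realType) (T : Type) (d : T -> T -> R).

Lemma borel_sigma : sigma_algebra setT (borel_d d).
Proof. exact: smallest_sigma_algebra. Qed.

Lemma borel_open U : is_open_d d U -> borel_d d U.
Proof. by move=> H; apply: sub_gen_smallest. Qed.

Lemma borel0 : borel_d d set0.
Proof. by case: borel_sigma. Qed.

Lemma borelC A : borel_d d A -> borel_d d (~` A).
Proof. by case: borel_sigma => _ H _ /H; rewrite setTD. Qed.

Lemma borelT : borel_d d setT.
Proof. by rewrite -setC0; apply: borelC; exact: borel0. Qed.

Lemma borel_bigcup (F : nat -> set T) : (forall n, borel_d d (F n)) ->
  borel_d d (\bigcup_n F n).
Proof. by case: borel_sigma => _ _ H /H. Qed.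

Lemma borelU A B : borel_d d A -> borel_d d B -> borel_d d (A `|` B).
Proof.
move=> hA hB; rewrite -bigcup2E; apply: borel_bigcup => -[|[|n]] //=; exact: borel0.
Qed.

Lemma borelI A B : borel_d d A -> borel_d d B -> borel_d d (A `&` B).
Proof.
move=> hA hB; rewrite -[A `&` B]setCK setCI; apply: borelC; apply: borelU; exact: borelC.
Qed.

Lemma borelD A B : borel_d d A -> borel_d d B -> borel_d d (A `\` B).
Proof. by move=> hA hB; rewrite setDE; apply: borelI => //; apply: borelC. Qed.

End Borel.
Arguments borel0 {R T} d.
Arguments borelT {R T} d.

Lemma borel_preimage (R : realType) (T U : Type) (d : T -> T -> R) (e : U -> U -> R)
  (g : T -> U) :
  (forall V, is_open_d e V -> is_open_d d (g @^-1` V)) ->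
  forall B, borel_d e B -> borel_d d (g @^-1` B).
Proof.
move=> hg B hB.
have : [set B | borel_d d (g @^-1` B)] B; last by [].
apply: (smallest_sub _ _ hB).
- split => /=.
  + by rewrite preimage_set0; exact: borel0.
  + by move=> A hA; rewrite setTD preimage_setC; exact: borelC.
  + by move=> F hF; rewrite preimage_bigcup; exact: borel_bigcup.
- by move=> V hV /=; apply: borel_open; exact: hg.
Qed.

Lemma lip1_open (R : realType) (T U : Type) (d : T -> T -> R) (e : U -> U -> R)
  (g : T -> U) : lip1 d e g ->
  forall V, is_open_d e V -> is_open_d d (g @^-1` V).
Proof.
move=> hg V hV x /hV [r r0 hr]; exists r => // y hy; apply: hr.
exact: le_lt_trans (hg x y) hy.
Qed.

Lemma borel_lip1 (R : realType) (T U : Type) (d : T -> T -> R) (e : U -> U -> R)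
  (g : T -> U) : lip1 d e g ->
  forall B, borel_d e B -> borel_d d (g @^-1` B).
Proof. by move=> hg; apply: borel_preimage; exact: lip1_open. Qed.

Section Meas.
Variables (R : realType) (T : Type) (d : T -> T -> R) (mu : set T -> R).
Hypothesis hmu : is_prob_on (borel_d d) mu.

Lemma cvg_ev_cst (u : nat -> R) (c l : R) (n0 : nat) :
  (forall n, (n0 <= n)%N -> u n = c) -> u @ \oo --> l -> l = c.
Proof.
move=> hu hl; have hc : u @ \oo --> c.
  by apply: cvg_near_cst; exists n0 => // n /= /hu.
exact: (cvg_unique _ hl hc).
Qed.

Lemma mu0 : mu set0 = 0.
Proof.
case: hmu => _ [_ hadd].
have := hadd (fun _ => set0) (fun _ => borel0 d).
have triv : trivIset setT (fun _ : nat => @set0 T) by move=> i j _ _ [x []].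
move/(_ triv); rewrite bigcup0 // => hc.
have hs : (fun n : nat => \sum_(i < n) mu set0) = (fun n => n%:R * mu set0).
  by apply/funext => n; rewrite sumr_const card_ord mulr_natl.
rewrite hs in hc.
have h1 := hc; rewrite -cvg_shiftS in h1.
have h2 := cvgB h1 hc.
rewrite subrr in h2.
apply: esym; apply: (@cvg_ev_cst _ (mu set0) _ 0%N _ (h2 _)) => n _ /=.
by rewrite !fctE mulrSr mulrDl mul1r addrAC subrr add0r.
Qed.

Lemma muU A B : borel_d d A -> borel_d d B -> A `&` B = set0 ->
  mu (A `|` B) = mu A + mu B.
Proof.
move=> hA hB hAB; case: hmu => _ [_ hadd].
pose F n := if n == 0%N then A else if n == 1%N then B else set0.
have hF : forall n, borel_d d (F n).
  by move=> [|[|n]]; rewrite /F //=; exact: borel0.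
have triv : trivIset setT F.
  move=> i j _ _ [x [hi hj]].
  have hA0 : forall y, A y -> B y -> False.
    by move=> y ya yb; have : (A `&` B) y by []; rewrite hAB.
  move: i j hi hj => [|[|i]] [|[|j]]; rewrite /F //=; try by move=> *; exfalso; eauto.
have := hadd F hF triv.
have -> : \bigcup_n F n = A `|` B.
  rewrite -bigcup2E; congr bigcup; apply/funext => -[|[|n]] //.
move=> /(@cvg_ev_cst _ (mu A + mu B) _ 2%N) h; apply: h => -[|[|n]] // _.
rewrite big_ord_recl big_ord_recl /F /= big1 ?addr0 //.
by move=> i _; exact: mu0.
Qed.

Lemma mu_ge0 A : borel_d d A -> 0 <= mu A.
Proof. by case: hmu => _ [+ _]; apply. Qed.

Lemma muT : mu setT = 1.
Proof. by case: hmu. Qed.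

Lemma mu_le A B : borel_d d A -> borel_d d B -> A `<=` B -> mu A <= mu B.
Proof.
move=> hA hB hAB.
have -> : B = A `|` (B `\` A).
  by rewrite setDUK.
rewrite muU //; first by rewrite lerDl mu_ge0 //; exact: borelD.
  exact: borelD.
by rewrite setDE setICA setICr setI0.
Qed.

Lemma mu_le1 A : borel_d d A -> mu A <= 1.
Proof. by move=> hA; rewrite -muT; apply: mu_le => //; exact: borelT. Qed.

Lemma mu_null A C : borel_d d A -> borel_d d C -> mu (~` C) = 0 ->
  mu A = mu (A `&` C).
Proof.
move=> hA hC h0.
have hAC : borel_d d (A `&` C) by exact: borelI.
have hAnC : borel_d d (A `&` ~` C) by apply: borelI => //; exact: borelC.
have -> : mu A = mu (A `&` C `|` A `&` ~` C) by rewrite -setIUr setUv setIT.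
rewrite muU //; last first.
  by rewrite setIACA setICr !setI0.
suff -> : mu (A `&` ~` C) = 0 by rewrite addr0.
apply/eqP; rewrite eq_le mu_ge0 // andbT -h0; apply: mu_le => //.
exact: borelC.
Qed.

End Meas.
Arguments cvg_ev_cst {R}.
Arguments mu0 {R T d mu}.
Arguments muU {R T d mu}.
Arguments mu_ge0 {R T d mu}.
Arguments muT {R T d mu}.
Arguments mu_le {R T d mu}.
Arguments mu_le1 {R T d mu}.
Arguments mu_null {R T d mu}.

Section Linf.
Variables (R : realType) (k : nat).
Implicit Types (x y z : 'I_k -> R).

Lemma linf_ge0 x y : 0 <= linf k x y.
Proof. by rewrite /linf; elim/big_ind: _ => // a b ha hb; rewrite le_max ha. Qed.

Lemma linf_coord x y i : `|x i - y i| <= linf k x y.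
Proof. exact: (le_bigmax 0 (fun i => `|x i - y i|) i). Qed.

Lemma linf_leP x y r : 0 <= r -> (linf k x y <= r <-> forall i, `|x i - y i| <= r).
Proof.
move=> r0; split => [h i|h]; first exact: le_trans (linf_coord x y i) h.
by apply/bigmax_leP; split.
Qed.

Lemma linf_ltP x y r : 0 < r -> (linf k x y < r <-> forall i, `|x i - y i| < r).
Proof.
move=> r0; split => [h i|h]; first exact: le_lt_trans (linf_coord x y i) h.
by apply/bigmax_ltP; split.
Qed.

Lemma linf_sym x y : linf k x y = linf k y x.
Proof. by rewrite /linf; apply: eq_bigr => i _; rewrite distrC. Qed.

Lemma linf_triangle x y z : linf k x z <= linf k x y + linf k y z.
Proof.
apply/linf_leP; first by rewrite addr_ge0 // linf_ge0.
move=> i; apply: le_trans (ler_distD (y i) (x i) (z i)) _.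
by rewrite lerD // linf_coord.
Qed.

Lemma linf_eq0 x y : linf k x y = 0 <-> x = y.
Proof.
split => [h|->]; last first.
  by apply/eqP; rewrite eq_le linf_ge0 andbT; apply/linf_leP => // i; rewrite subrr normr0.
apply/funext => i; apply/eqP; rewrite -subr_eq0 -normr_eq0 eq_le normr_ge0 andbT.
by rewrite -h linf_coord.
Qed.

Lemma linf_xx x : linf k x x = 0.
Proof. by apply/linf_eq0. Qed.

Lemma linf_metric : is_metric (@linf R k).
Proof.
split; first exact: linf_ge0.
split; first exact: linf_eq0.
split; first exact: linf_sym.
exact: linf_triangle.
Qed.

Lemma open_ball x r : is_open_d (linf k) [set y | linf k x y < r].
Proof.
move=> y /= hy; exists (r - linf k x y); first by rewrite subr_gt0.
move=> z hz; apply: le_lt_trans (linf_triangle x y z) _.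
by rewrite -ltrBrDl.
Qed.

Lemma cube_closed : is_open_d (@linf R k) (~` cube_set k).
Proof.
move=> x /= hx; have hx' : k%:R < linf k x (fun _ => 0) by rewrite ltNge; apply/negP.
exists (linf k x (fun _ => 0) - k%:R); first by rewrite subr_gt0.
move=> y hy /= hyc.
move: hyc; rewrite /cube_set /=; have := linf_triangle x y (fun _ => 0); lra.
Qed.

Lemma borel_cube : borel_d (@linf R k) (cube_set k).
Proof. by rewrite -[cube_set k]setCK; apply: borelC; apply: borel_open; exact: cube_closed. Qed.

End Linf.
Arguments linf_ge0 {R k}. Arguments linf_coord {R k}. Arguments linf_leP {R k}.
Arguments linf_ltP {R k}. Arguments linf_sym {R k}. Arguments linf_triangle {R k}.
Arguments linf_eq0 {R k}. Arguments linf_xx {R k}. Arguments open_ball {R k}.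

Section Cube.
Variables (R : realType) (k : nat).

Definition cdist (x y : cube R k) : R := linf k (sval x) (sval y).

Lemma cube_eq (x y : cube R k) : sval x = sval y -> x = y.
Proof.
case: x y => [x hx] [y hy] /= e; subst y; congr exist; exact: bool_irrelevance.
Qed.

Lemma cube_metric : is_metric cdist.
Proof.
rewrite /cdist; split; first by move=> *; exact: linf_ge0.
split; first by move=> x y; split => [/linf_eq0/cube_eq|->] //; rewrite linf_xx.
split; first by move=> *; exact: linf_sym.
by move=> *; exact: linf_triangle.
Qed.

Lemma cube_bound (x : cube R k) i : `|sval x i| <= k%:R.
Proof.
case: x => x /= hx; move/linf_leP: hx => /(_ (ler0n _ _)) /(_ i).
by rewrite subr0.
Qed.

Lemma cube_complete : is_complete_d cdist.
Proof.
move=> u hu.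
pose v i n := sval (u n) i.
have cv : forall i, cvgn (v i).
  move=> i; apply/cauchy_cvgP; apply: cauchy_exP => e e0.
  have [N hN] := hu e e0.
  exists (v i N); exists N => // n /= hn.
  rewrite /ball /=; have := hN N n (leqnn N) hn.
  by move/(linf_ltP _ _ _ e0) => /(_ i).
pose l i := limn (v i).
have hl : forall i e, 0 < e -> exists N, forall n, (N <= n)%N -> `|l i - v i n| < e.
  move=> i e e0; have := cv i; move/cvgrPdist_lt => /(_ e e0) [N _ hN].
  by exists N => n hn; apply: hN.
have hlk : linf k l (fun _ => 0) <= k%:R.
  apply/linf_leP => // i; rewrite subr0; rewrite leNgt; apply/negP => hi.
  have [N hN] := hl i (`|l i| - k%:R) ltac:(by rewrite subr_gt0).
  have h1 := hN N (leqnn N); have h2 := cube_bound (u N) i.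
  have h3 := ler_distD (v i N) (l i) 0; rewrite !subr0 in h3.
  rewrite /v in h1 h3; lra.
exists (exist _ l hlk) => e e0.
have [f hf] := choice (fun i => hl i e e0).
exists (\max_(i < k) f i)%N => n hn; rewrite /cdist /=.
apply/linf_ltP => // i; rewrite distrC; apply: hf.
exact: leq_trans (leq_bigmax i) hn.
Qed.

Definition clamp (t : R) : R :=
  if t < - k%:R then - k%:R else if k%:R < t then k%:R else t.

Lemma clamp_bound t : `|clamp t| <= k%:R.
Proof.
rewrite /clamp ler_norml; have k0 : (0 : R) <= k%:R by [].
case: (ltP t (- k%:R)) => h1; last case: (ltP k%:R t) => h2;
  apply/andP; split; lra.
Qed.

Lemma clamp_id t : `|t| <= k%:R -> clamp t = t.
Proof.
rewrite ler_norml => /andP[h1 h2]; rewrite /clamp.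
case: (ltP t (- k%:R)) => h3; last case: (ltP k%:R t) => h4; lra.
Qed.

Lemma clamp_lip s t : `|clamp s - clamp t| <= `|s - t|.
Proof.
have hB1 := ler_norm (s - t); have hB2 := ler_norm (t - s); rewrite distrC in hB2.
have k0 : (0 : R) <= k%:R by [].
rewrite ler_norml /clamp.
case: (ltP s (- k%:R)) => h1; last case: (ltP k%:R s) => h2;
case: (ltP t (- k%:R)) => h3; try case: (ltP k%:R t) => h4;
  apply/andP; split; lra.
Qed.

Definition clampc (v : 'I_k -> R) : cube R k.
Proof.
exists (fun i => clamp (v i)).
by apply/linf_leP => // i; rewrite subr0 clamp_bound.
Defined.

Definition cseq (n : nat) : cube R k :=
  match @unpickle {ffun 'I_k -> rat} n with
  | Some q => clampc (fun i => ratr (q i))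
  | None => clampc (fun _ => 0)
  end.

Lemma cube_separable : is_separable_d cdist.
Proof.
exists cseq => x e e0.
have hq : forall i, exists q : rat, ratr q \in `](sval x i - e), (sval x i + e)[%R.
  by move=> i; apply: rat_in_itvoo; lra.
have [f hf] := choice hq.
exists (pickle [ffun i => f i]); rewrite /cseq pickleK /cdist /=.
apply/linf_ltP => // i; rewrite ffunE.
rewrite -{1}(clamp_id _ (cube_bound x i)).
apply: le_lt_trans (clamp_lip _ _) _.
move: (hf i); rewrite in_itv /= => /andP[h1 h2].
rewrite ltr_norml; apply/andP; split; lra.
Qed.

End Cube.
Arguments cube_eq {R k x y}.
Arguments cube_bound {R k}.

Section Cube2.
Variables (R : realType) (k : nat).

Lemma sval_lip1 : lip1 (@cdist R k) (linf k) sval.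
Proof. by move=> x y; rewrite /cdist. Qed.

Lemma borel_sval_pre B : borel_d (linf k) B -> borel_d (@cdist R k) (sval @^-1` B).
Proof. by apply: borel_lip1; exact: sval_lip1. Qed.

Lemma sval_img_compl (A : set (cube R k)) :
  sval @` (setT `\` A) = cube_set k `\` (sval @` A).
Proof.
apply/seteqP; split => y /=.
  move=> [x [_ nAx] <-]; split; first exact: (proj2_sig x).
  by move=> [x' Ax' e]; apply: nAx; rewrite -(cube_eq e).
move=> [hy hn]; exists (exist _ y hy) => //; split => // hA; apply: hn.
by exists (exist _ y hy).
Qed.

Lemma sval_img_bigcup (F : nat -> set (cube R k)) :
  sval @` (\bigcup_n F n) = \bigcup_n (sval @` F n).
Proof.
apply/seteqP; split => y /=.
  by move=> [x [n _ Fx] <-]; exists n => //; exists x.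
by move=> [n _ [x Fx <-]]; exists x => //; exists n.
Qed.

Lemma sval_img_open (A : set (cube R k)) : is_open_d (@cdist R k) A ->
  borel_d (linf k) (sval @` A).
Proof.
move=> hA.
pose V := [set y : 'I_k -> R | exists (x : cube R k) (r : R), A x /\ 0 < r /\
   (forall z : cube R k, linf k (sval x) (sval z) < r -> A z) /\ linf k (sval x) y < r].
have hV : is_open_d (linf k) V.
  move=> y [x [r [Ax [r0 [hr hy]]]]].
  exists (r - linf k (sval x) y); first by rewrite subr_gt0.
  move=> y' hy'; exists x, r; do 3 split => //.
  have := linf_triangle (sval x) y y'; lra.
have -> : sval @` A = V `&` cube_set k.
  apply/seteqP; split => y /=.
    move=> [x Ax <-]; split; last exact: (proj2_sig x).
    have [r r0 hr] := hA x Ax.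
    by exists x, r; do 3 split => //; rewrite linf_xx.
  move=> [[x [r [Ax [r0 [hr hy]]]]] hc]; exists (exist _ y hc) => //.
  exact: hr.
apply: borelI; first exact: borel_open.
exact: borel_cube.
Qed.

Lemma borel_sval_img A : borel_d (@cdist R k) A -> borel_d (linf k) (sval @` A).
Proof.
move=> hA.
have : [set A | borel_d (linf k) (sval @` A)] A; last by [].
apply: (smallest_sub _ _ hA).
- split => /=.
  + by rewrite image_set0; exact: borel0.
  + move=> B hB; rewrite sval_img_compl; apply: borelD => //; exact: borel_cube.
  + by move=> F hF; rewrite sval_img_bigcup; exact: borel_bigcup.
- by move=> U hU; exact: sval_img_open.
Qed.

Lemma sval_img_T : sval @` [set: cube R k] = cube_set k.
Proof.
apply/seteqP; split => y /=; first by move=> [x _ <-]; exact: (proj2_sig x).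
by move=> hy; exists (exist _ y hy).
Qed.

Lemma cube_prob (mu : set ('I_k -> R) -> R) :
  is_prob_on (borel_d (linf k)) mu -> mu (~` cube_set k) = 0 ->
  is_prob_on (borel_d (@cdist R k)) (fun A => mu (sval @` A)).
Proof.
move=> hmu h0; split.
  rewrite sval_img_T.
  have := mu_null hmu _ _ (borelT _) (@borel_cube R k) h0.
  by rewrite setTI => <-; case: hmu.
split; first by move=> A hA; apply: (mu_ge0 hmu); exact: borel_sval_img.
move=> F hF triv; rewrite sval_img_bigcup.
case: hmu => _ [_ hadd]; apply: hadd.
  by move=> n; exact: borel_sval_img.
move=> i j _ _ [y [[x Fx ex] [x' Fx' ex']]].
apply: (triv i j) => //; exists x; split => //.
by rewrite (@cube_eq _ _ x x') // ex ex'.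
Qed.

Lemma cube_mmspace (mu : set ('I_k -> R) -> R) :
  is_prob_on (borel_d (linf k)) mu -> mu (~` cube_set k) = 0 ->
  is_mmspace (cube_mms k mu).
Proof.
move=> hmu h0; split; first exact: cube_metric.
split; first exact: cube_complete.
split; first exact: cube_separable.
exact: cube_prob.
Qed.

End Cube2.
Arguments cube_mmspace {R k mu}.
Arguments cube_prob {R k mu}.
Arguments borel_sval_img {R k A}.
Arguments borel_sval_pre {R k B}.

Section Haus.
Variables (R : realType) (M : Type) (D : M -> M -> R) (S T : set M).
Hypotheses (hS : S !=set0) (hT : T !=set0)
  (hD : forall x y, S x -> T y -> 0 <= D x y <= 1).

Let g x := inf [set s | exists2 y, T y & s = D x y].
Let h y := inf [set s | exists2 x, S x & s = D x y].

Lemma g_bounds x : S x -> 0 <= g x <= 1.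
Proof.
move=> Sx; have [y Ty] := hT; have /andP[h0 h1] := hD _ _ Sx Ty.
apply/andP; split.
  apply: lb_le_inf; first by exists (D x y), y.
  by move=> s [y' Ty' ->]; have /andP[] := hD _ _ Sx Ty'.
apply: le_trans h1; apply: ge_inf; last by exists y.
by exists 0 => s [y' Ty' ->]; have /andP[] := hD _ _ Sx Ty'.
Qed.

Lemma h_bounds y : T y -> 0 <= h y <= 1.
Proof.
move=> Ty; have [x Sx] := hS; have /andP[h0 h1] := hD _ _ Sx Ty.
apply/andP; split.
  apply: lb_le_inf; first by exists (D x y), x.
  by move=> s [x' Sx' ->]; have /andP[] := hD _ _ Sx' Ty.
apply: le_trans h1; apply: ge_inf; last by exists x.
by exists 0 => s [x' Sx' ->]; have /andP[] := hD _ _ Sx' Ty.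
Qed.

Lemma hausE : hausdorff D S T =
  Num.max (sup [set r | exists2 x, S x & r = g x]) (sup [set r | exists2 y, T y & r = h y]).
Proof. by []. Qed.

Lemma sup1_ub x : S x -> g x <= sup [set r | exists2 x, S x & r = g x].
Proof.
move=> Sx; apply: ub_le_sup; last by exists x.
by exists 1 => r [x' Sx' ->]; have /andP[] := g_bounds _ Sx'.
Qed.

Lemma sup2_ub y : T y -> h y <= sup [set r | exists2 y, T y & r = h y].
Proof.
move=> Ty; apply: ub_le_sup; last by exists y.
by exists 1 => r [y' Ty' ->]; have /andP[] := h_bounds _ Ty'.
Qed.

Lemma haus_ge0 : 0 <= hausdorff D S T.
Proof.
rewrite hausE; have [x Sx] := hS; have /andP[g0 _] := g_bounds _ Sx.
by rewrite le_max (le_trans g0 (sup1_ub _ Sx)).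
Qed.

Lemma haus_le1 : hausdorff D S T <= 1.
Proof.
rewrite hausE ge_max; apply/andP; split; apply: ge_sup.
- by have [x Sx] := hS; exists (g x), x.
- by move=> r [x Sx ->]; have /andP[] := g_bounds _ Sx.
- by have [y Ty] := hT; exists (h y), y.
- by move=> r [y Ty ->]; have /andP[] := h_bounds _ Ty.
Qed.

Lemma haus_approx1 x e : S x -> 0 < e ->
  exists2 y, T y & D x y < hausdorff D S T + e.
Proof.
move=> Sx e0.
have hg : g x < hausdorff D S T + e.
  apply: le_lt_trans (sup1_ub _ Sx) _.
  have hm : sup [set r | exists2 x, S x & r = g x] <= hausdorff D S T.
    by rewrite hausE le_max lexx.
  by apply: le_lt_trans hm _; rewrite ltrDl.
have hne : [set s | exists2 y, T y & s = D x y] !=set0.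
  by have [y Ty] := hT; exists (D x y), y.
have [s hs1 hs] := inf_lt hne hg.
by move: hs1 => /= [y Ty es]; exists y => //; rewrite -es.
Qed.

Lemma haus_approx2 y e : T y -> 0 < e ->
  exists2 x, S x & D x y < hausdorff D S T + e.
Proof.
move=> Ty e0.
have hh : h y < hausdorff D S T + e.
  apply: le_lt_trans (sup2_ub _ Ty) _.
  have hm : sup [set r | exists2 y, T y & r = h y] <= hausdorff D S T.
    by rewrite hausE le_max lexx orbT.
  by apply: le_lt_trans hm _; rewrite ltrDl.
have hne : [set s | exists2 x, S x & s = D x y] !=set0.
  by have [x Sx] := hS; exists (D x y), x.
have [s hs1 hs] := inf_lt hne hh.
by move: hs1 => /= [x Sx es]; exists x => //; rewrite -es.
Qed.

Lemma haus_ub c :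
  (forall x, S x -> exists2 y, T y & D x y <= c) ->
  (forall y, T y -> exists2 x, S x & D x y <= c) ->
  hausdorff D S T <= c.
Proof.
move=> h1 h2; rewrite hausE ge_max; apply/andP; split; apply: ge_sup.
- by have [x Sx] := hS; exists (g x), x.
- move=> r [x Sx ->]; have [y Ty hy] := h1 x Sx; apply: le_trans hy.
  apply: ge_inf; last by exists y.
  by exists 0 => s [y' Ty' ->]; have /andP[] := hD _ _ Sx Ty'.
- by have [y Ty] := hT; exists (h y), y.
- move=> r [y Ty ->]; have [x Sx hx] := h2 y Ty; apply: le_trans hx.
  apply: ge_inf; last by exists x.
  by exists 0 => s [x' Sx' ->]; have /andP[] := hD _ _ Sx' Ty.
Qed.

End Haus.

Section Prok.
Variables (R : realType) (k : nat).
Local Notation vec := ('I_k -> R).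

Definition Uset (e : R) (A : set vec) := [set x | exists2 y, A y & linf k x y < e].

Lemma Uset_open e A : is_open_d (linf k) (Uset e A).
Proof.
move=> x [y Ay hxy]; exists (e - linf k x y); first by rewrite subr_gt0.
move=> z hz; exists y => //; have := linf_triangle z x y; rewrite (linf_sym z x); lra.
Qed.

Lemma Uset_borel e A : borel_d (linf k) (Uset e A).
Proof. by apply: borel_open; exact: Uset_open. Qed.

Lemma Uset_mono e e' A : e <= e' -> Uset e A `<=` Uset e' A.
Proof. by move=> hee x [y Ay hy]; exists y => //; exact: lt_le_trans hee. Qed.

Definition psetP (mu nu : set vec -> R) := [set e : R | 0 < e /\
  forall A, borel_d (linf k) A -> nu A - e <= mu (Uset e A)].

Lemma prokE mu nu : prokhorov k mu nu = inf (psetP mu nu).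
Proof. by []. Qed.

Variables (mu nu : set vec -> R).
Hypotheses (hmu : is_prob_on (borel_d (linf k)) mu)
  (hnu : is_prob_on (borel_d (linf k)) nu).

Lemma pset_up e e' : psetP mu nu e -> e <= e' -> psetP mu nu e'.
Proof.
move=> [e0 he] hee; split; first exact: lt_le_trans hee.
move=> A hA; have := he A hA.
have := mu_le hmu _ _ (Uset_borel e A) (Uset_borel e' A) (Uset_mono e e' A hee).
lra.
Qed.

Lemma pset_1 : psetP mu nu 1.
Proof.
split => // A hA; have := mu_le1 hnu _ hA; have := mu_ge0 hmu _ (Uset_borel 1 A).
lra.
Qed.

Lemma pset_lb : has_lbound (psetP mu nu).
Proof. by exists 0 => e [e0 _]; exact: ltW. Qed.

Lemma prok_ge0 : 0 <= prokhorov k mu nu.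
Proof.
by rewrite prokE; apply: lb_le_inf; [exists 1; exact: pset_1 | move=> e [e0 _]; exact: ltW].
Qed.

Lemma prok_le1 : prokhorov k mu nu <= 1.
Proof. by rewrite prokE; apply: ge_inf; [exact: pset_lb | exact: pset_1]. Qed.

Lemma prok_lt E : prokhorov k mu nu < E -> psetP mu nu E.
Proof.
rewrite prokE => h; have [e he heE] := inf_lt (ltac:(by exists 1; exact: pset_1)) h.
exact: pset_up (ltW heE).
Qed.

Lemma prok_le E : psetP mu nu E -> prokhorov k mu nu <= E.
Proof. by rewrite prokE => hE; apply: ge_inf => //; exact: pset_lb. Qed.

End Prok.

Section Lim.
Variable R : realType.
Implicit Types (u v : nat -> R).

Lemma lim_of {u} {l : R} : u @ \oo --> l -> limn u = l.
Proof. by move=> h; exact: (cvg_lim _ h). Qed.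

Lemma ev_cvg u v n0 (l : R) : (forall n, (n0 <= n)%N -> u n = v n) ->
  v @ \oo --> l -> u @ \oo --> l.
Proof.
move=> huv hv; rewrite -(cvg_shiftn n0).
have -> : (fun n => u (n + n0)%N) = (fun n => v (n + n0)%N).
  by apply/funext => n; apply: huv; rewrite leq_addl.
by rewrite (cvg_shiftn n0 v).
Qed.

Lemma lim_le_ev u (l c : R) n0 : u @ \oo --> l -> (forall n, (n0 <= n)%N -> u n <= c) -> l <= c.
Proof.
move=> hl hc; rewrite -(lim_of hl); apply: limr_le; first exact: (cvgP _ hl).
by exists n0 => // n /= /hc.
Qed.

Lemma lim_ge_ev u (l c : R) n0 : u @ \oo --> l -> (forall n, (n0 <= n)%N -> c <= u n) -> c <= l.
Proof.
move=> hl hc; rewrite -(lim_of hl); apply: limr_ge; first exact: (cvgP _ hl).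
by exists n0 => // n /= /hc.
Qed.

Lemma cvg_bigsum (I : seq nat) (f : nat -> nat -> R) (l : nat -> R) :
  (forall i, f i @ \oo --> l i) ->
  (fun m => \sum_(i <- I) f i m) @ \oo --> \sum_(i <- I) l i.
Proof.
move=> hf; elim: I => [|i I IH].
  rewrite big_nil; under eq_fun do rewrite big_nil; exact: cvg_cst.
rewrite big_cons; under eq_fun do rewrite big_cons.
exact: cvgD.
Qed.

Lemma nd_bounded_cvg u (c : R) : (forall n, u n <= u n.+1) -> (forall n, u n <= c) ->
  u @ \oo --> limn u.
Proof.
move=> hnd hc.
have hh : {homo u : n m / (n <= m)%N >-> n <= m} by apply/nondecreasing_seqP.
apply: (nondecreasing_is_cvgn hh).
by exists c => _ [n _ <-].
Qed.

Lemma nd_le_lim u (c : R) : (forall n, u n <= u n.+1) -> (forall n, u n <= c) ->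
  forall n, u n <= limn u.
Proof.
move=> hnd hc n; apply: (@lim_ge_ev u _ _ n (nd_bounded_cvg _ _ hnd hc)).
move=> m hm.
have hh : {homo u : n m / (n <= m)%N >-> n <= m} by apply/nondecreasing_seqP.
exact: hh.
Qed.

End Lim.
Arguments lim_of {R u l}.
Arguments ev_cvg {R}.
Arguments lim_le_ev {R}.
Arguments lim_ge_ev {R}.
Arguments cvg_bigsum {R}.
Arguments nd_bounded_cvg {R}.
Arguments nd_le_lim {R}.

Section A1.
Variables (R : realType) (N : option nat) (a : nat -> R).
Hypothesis ha : inA1 N a.

Definition Ssum (m : nat) : R := \sum_(1 <= i < m) pad N a i.
Definition Tsum (M m : nat) : R := \sum_(M <= i < m) pad N a i.

Lemma pad_ge0 n : 0 <= pad N a n.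
Proof.
rewrite /pad; case: ifP => // hn; have /andP[h _] := ha.1 n hn; exact: ltW.
Qed.

Lemma pad_le1 n : pad N a n <= 1.
Proof. by rewrite /pad; case: ifP => // hn; have /andP[_ h] := ha.1 n hn. Qed.

Lemma pad_idx n : in_idx N n -> pad N a n = a n.
Proof. by rewrite /pad => ->. Qed.

Lemma Ssum_step m : Ssum m <= Ssum m.+1.
Proof.
rewrite /Ssum; case: m => [|m]; first by rewrite !big_geq.
rewrite [X in _ <= X]big_nat_recr //=; have := pad_ge0 m.+1; lra.
Qed.

Lemma Ssum_homo : {homo Ssum : n m / (n <= m)%N >-> n <= m}.
Proof. by apply/nondecreasing_seqP; exact: Ssum_step. Qed.

Lemma Ssum_cvg : Ssum @ \oo --> (1 : R).
Proof. exact: ha.2. Qed.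

Lemma Ssum_le1 m : Ssum m <= 1.
Proof.
apply: (@lim_ge_ev _ Ssum 1 (Ssum m) m Ssum_cvg) => n hn; exact: Ssum_homo.
Qed.

Lemma Ssum_ge0 m : 0 <= Ssum m.
Proof. by rewrite /Ssum; apply: sumr_ge0 => i _; exact: pad_ge0. Qed.

Lemma tail_split M m : (1 <= M)%N -> (M <= m)%N -> Ssum m = Ssum M + Tsum M m.
Proof. by move=> h1 h2; rewrite /Ssum /Tsum (@big_cat_nat _ _ _ M 1 m _ _ h1 h2). Qed.

Lemma Tsum_cvg M : (1 <= M)%N -> Tsum M @ \oo --> 1 - Ssum M.
Proof.
move=> h1; apply: (@ev_cvg _ _ (fun m => Ssum m - Ssum M) M).
  by move=> n hn; rewrite (tail_split _ _ h1 hn) addrC addKr.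
by apply: cvgB; [exact: Ssum_cvg | exact: cvg_cst].
Qed.

Lemma rseries_tail M : (1 <= M)%N -> rseries (pad N a) M = 1 - Ssum M.
Proof.
move=> h1; have h := Tsum_cvg _ h1.
have e : rseries (pad N a) M = limn (Tsum M) by [].
by rewrite e; exact: (cvg_lim _ h).
Qed.

Lemma rseries_ge0 M : (1 <= M)%N -> 0 <= rseries (pad N a) M.
Proof. by move=> h1; rewrite (rseries_tail _ h1) subr_ge0 Ssum_le1. Qed.

Lemma Tsum_le M m : (1 <= M)%N -> Tsum M m <= rseries (pad N a) M.
Proof.
move=> h1; rewrite (rseries_tail _ h1); case: (leqP M m) => hm.
  have h2 := Ssum_le1 m; rewrite (tail_split _ _ h1 hm) in h2; lra.
rewrite /Tsum big_geq; last exact: ltnW.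
by rewrite subr_ge0 Ssum_le1.
Qed.

End A1.
Arguments pad_ge0 {R N a}. Arguments pad_le1 {R N a}. Arguments pad_idx {R N a}.
Arguments Ssum_step {R N a}. Arguments Ssum_homo {R N a}. Arguments Ssum_cvg {R N a}.
Arguments Ssum_le1 {R N a}. Arguments Ssum_ge0 {R N a}. Arguments tail_split {R N a}.
Arguments Tsum_cvg {R N a}. Arguments rseries_tail {R N a}. Arguments rseries_ge0 {R N a}.
Arguments Tsum_le {R N a}.

Lemma cvg_bigsum_in (R : realType) (I : seq nat) (f : nat -> nat -> R) (l : nat -> R) :
  (forall i, i \in I -> f i @ \oo --> l i) ->
  (fun m => \sum_(i <- I) f i m) @ \oo --> \sum_(i <- I) l i.
Proof.
elim: I => [|i I IH] hf.
  rewrite big_nil; under eq_fun do rewrite big_nil; exact: cvg_cst.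
rewrite big_cons; under eq_fun do rewrite big_cons.
apply: cvgD; first by apply: hf; rewrite mem_head.
by apply: IH => j hj; apply: hf; rewrite in_cons hj orbT.
Qed.

Lemma cvg_scale (R : realType) (c : R) (u : nat -> R) (l : R) :
  u @ \oo --> l -> (fun m => c * u m) @ \oo --> c * l.
Proof. by move=> h; apply: cvgM => //; exact: cvg_cst. Qed.

Lemma push_prob (R : realType) (T U : Type) (d : T -> T -> R) (e : U -> U -> R)
  (g : T -> U) (m : set T -> R) :
  is_prob_on (borel_d d) m -> lip1 d e g ->
  is_prob_on (borel_d e) (fun B => m (g @^-1` B)).
Proof.
move=> [h1 [h2 h3]] hg; split; first by rewrite preimage_setT.
split; first by move=> A hA; apply: h2; exact: borel_lip1 hg _ hA.
move=> F hF triv; rewrite preimage_bigcup; apply: h3.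
  by move=> n; exact: borel_lip1 hg _ (hF n).
move=> i j _ _ [x [hi hj]]; apply: triv => //; exists (g x); by split.
Qed.

Lemma cvg_to_eq (R : realType) (u : nat -> R) (l l' : R) :
  u @ \oo --> l -> l = l' -> u @ \oo --> l'.
Proof. by move=> h <-. Qed.

Section Dirac.
Variables (R : realType) (k : nat).
Local Notation vec := ('I_k -> R).

Definition ddirac : set vec -> R := fun A => if `[< A (fun _ => 0) >] then 1 else 0.

Lemma dirac_ge0 A : 0 <= ddirac A.
Proof. by rewrite /ddirac; case: ifP. Qed.

Lemma dirac_le1 A : ddirac A <= 1.
Proof. by rewrite /ddirac; case: ifP. Qed.

Lemma dirac_prob : is_prob_on (borel_d (linf k)) ddirac.
Proof.
split; first by rewrite /ddirac asboolT.
split; first by move=> A _; exact: dirac_ge0.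
move=> F hF triv.
have [[n0 hn0]|hno] := pselect (exists n, F n (fun _ => 0)).
  apply: (@cvg_to_eq _ _ 1); last by rewrite /ddirac asboolT //; exists n0.
  apply: (@ev_cvg _ _ (fun _ => 1) n0.+1); last exact: cvg_cst.
  move=> m hm; rewrite (bigD1 (Ordinal hm)) //= /ddirac asboolT // big1 ?addr0 //.
  move=> i hi; case: ifP => // /asboolP hFi; exfalso; move: hi => /eqP; apply.
  apply: val_inj => /=; apply: (triv i n0) => //; by exists (fun _ => 0); split.
apply: (@cvg_to_eq R _ (0 : R)); last first.
  by rewrite /ddirac; case: ifP => // /asboolP [n _ hn]; exfalso; apply: hno; exists n.
apply: (@ev_cvg _ _ (fun _ => 0) 0); last exact: cvg_cst.
move=> m _; rewrite big1 // => i _; rewrite /ddirac; case: ifP => // /asboolP hFi.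
by exfalso; apply: hno; exists i.
Qed.

Lemma zero_cube : cube_set k (fun _ : 'I_k => (0 : R)).
Proof. by rewrite /cube_set /= linf_xx. Qed.

Lemma dirac_cube : ddirac (~` cube_set k) = 0.
Proof. by rewrite /ddirac; case: ifP => // /asboolP h; exfalso; apply: h; exact: zero_cube. Qed.

Definition c0 : cube R k := exist _ (fun _ => 0) zero_cube.

Lemma pyramid_dirac (P : mms R -> Prop) : pyramid P -> Mset P k ddirac.
Proof.
move=> [hmm [[X PX] [hdown _]]]; split; first exact: dirac_prob.
split; first exact: dirac_cube.
apply: (hdown X _ PX (cube_mmspace dirac_prob dirac_cube)).
have [[hd0 _] [_ [_ hXp]]] := hmm X PX.
exists (fun _ => c0); split.
  by move=> x x' /=; rewrite linf_xx; exact: hd0.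
move=> A hA /=.
have [hA0|hA0] := pselect (A c0).
  have -> : (fun _ : mm_carrier X => c0) @^-1` A = setT.
    by apply/seteqP; split => x //= _.
  rewrite (muT hXp) /ddirac asboolT //; by exists c0.
have -> : (fun _ : mm_carrier X => c0) @^-1` A = set0.
  by apply/seteqP; split => x //=.
rewrite (mu0 hXp) /ddirac; case: ifP => // /asboolP [x Ax hx].
exfalso; apply: hA0; suff <- : x = c0 by [].
exact: cube_eq.
Qed.

End Dirac.

Section Decomp.
Variables (R : realType) (k : nat).
Local Notation vec := ('I_k -> R).

Lemma sval_pre_img (A : set (cube R k)) : sval @^-1` (sval @` A) = A.
Proof.
apply/seteqP; split => x /=; last by move=> Ax; exists x.
by move=> [y Ay e]; rewrite -(cube_eq e).
Qed.

Lemma sval_img_pre (B : set vec) :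
  (sval : cube R k -> vec) @` ((sval : cube R k -> vec) @^-1` B) = B `&` cube_set k.
Proof.
apply/seteqP; split => y /=.
  by move=> [x Bx <-]; split => //; exact: (proj2_sig x).
by move=> [By hy]; exists (exist _ y hy : cube R k).
Qed.

Lemma decomp (P : nat -> mms R -> Prop) (N : option nat) (a : nat -> R)
  (mu : set vec -> R) :
  (forall n, in_idx N n -> pyramid (P n)) -> Mset (dsum N a P) k mu ->
  exists mus : nat -> set vec -> R,
    (forall n, in_idx N n -> Mset (P n) k (mus n)) /\
    (forall B, borel_d (linf k) B ->
      (fun m => \sum_(1 <= n < m) pad N a n * mus n B) @ \oo --> mu B).
Proof.
move=> hP [hprob [h0 [hmm [Xs [f [hXf hconv]]]]]].
exists (fun n B => mm_meas (Xs n) (f n @^-1` (sval @^-1` B))); split.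
  move=> n hn; have [PX lf] := hXf n hn.
  have [_ [_ [hdown _]]] := hP n hn.
  have Xmm := (hP n hn).1 _ PX.
  have [_ [_ [_ hXp]]] := Xmm.
  have lg : lip1 (mm_dist (Xs n)) (linf k) (fun x => sval (f n x)).
    by move=> x x'; exact: lf.
  have hpr := @push_prob _ _ _ _ _ _ _ hXp lg.
  have hc0 : mm_meas (Xs n) (f n @^-1` (sval @^-1` (~` cube_set k))) = 0.
    have -> : f n @^-1` (sval @^-1` (~` cube_set k)) = set0.
      by apply/seteqP; split => x //= hx; apply: hx; exact: (proj2_sig (f n x)).
    exact: (mu0 hXp).
  split => //; split => //.
  apply: (hdown _ _ PX (cube_mmspace hpr hc0)).
  exists (f n); split => //.
  move=> A hA /=.
  by rewrite -[RHS]/(mm_meas (Xs n) (f n @^-1` (sval @^-1` (sval @` A)))) sval_pre_img.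
move=> B hB.
have := hconv (sval @^-1` B) (borel_sval_pre hB).
rewrite /= sval_img_pre -(mu_null hprob _ _ hB (@borel_cube R k) h0).
by [].
Qed.

Lemma decomp_lower N a mus (mu : set vec -> R) M B :
  inA1 N a -> (1 <= M)%N ->
  (forall n, in_idx N n -> 0 <= mus n B) ->
  (fun m => \sum_(1 <= n < m) pad N a n * mus n B) @ \oo --> mu B ->
  \sum_(1 <= n < M.+1) pad N a n * mus n B <= mu B.
Proof.
move=> ha hM hge hc; apply: (lim_ge_ev _ _ _ M.+1 hc) => m hm.
rewrite (@big_cat_nat _ _ _ M.+1 1 m) //=; rewrite lerDl.
apply: sumr_ge0 => i _; rewrite /pad; case: ifP => hi; last by rewrite mul0r.
by apply: mulr_ge0; [have /andP[/ltW] := ha.1 i hi | exact: hge].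
Qed.

Lemma decomp_upper N b nus (nu : set vec -> R) M B :
  inA1 N b -> (1 <= M)%N ->
  (forall n, in_idx N n -> 0 <= nus n B <= 1) ->
  (fun m => \sum_(1 <= n < m) pad N b n * nus n B) @ \oo --> nu B ->
  nu B <= \sum_(1 <= n < M.+1) pad N b n * nus n B + rseries (pad N b) M.+1.
Proof.
move=> hb hM hb01 hc; apply: (lim_le_ev _ _ _ M.+1 hc) => m hm.
rewrite (@big_cat_nat _ _ _ M.+1 1 m) //=; rewrite lerD2l.
apply: le_trans (@Tsum_le _ _ _ hb M.+1 m (ltn0Sn M)); rewrite /Tsum.
apply: ler_sum => i _; rewrite /pad; case: ifP => hi; last by rewrite mul0r.
have /andP[h1 h2] := hb01 i hi; have /andP[h3 h4] := hb.1 i hi.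
by rewrite ler_piMr // ltW.
Qed.

End Decomp.

Section Mix.
Variables (R : realType) (k : nat).
Local Notation vec := ('I_k -> R).

Definition mixt (M : nat) (w : nat -> R) (nus : nat -> set vec -> R) (t : R) :
  set vec -> R :=
  fun B => \sum_(1 <= n < M.+1) w n * nus n B + t * ddirac R k B.

Lemma mixt_prob M w nus t :
  (forall n, (1 <= n <= M)%N -> is_prob_on (borel_d (linf k)) (nus n)) ->
  (forall n, (1 <= n <= M)%N -> 0 <= w n) -> 0 <= t ->
  \sum_(1 <= n < M.+1) w n + t = 1 ->
  is_prob_on (borel_d (linf k)) (mixt M w nus t).
Proof.
move=> hp hw ht hs; split.
  rewrite /mixt /ddirac asboolT // mulr1 -hs; congr (_ + _).
  apply: eq_big_nat => n hn; have [-> _] := hp n hn; exact: mulr1.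
split.
  move=> A hA; rewrite /mixt; apply: addr_ge0; last exact: mulr_ge0 (dirac_ge0 _ _ _).
  rewrite big_nat_cond; apply: sumr_ge0 => n /andP[hn _].
  apply: mulr_ge0; first exact: hw.
  have [_ [h _]] := hp n hn; exact: h.
move=> F hF triv.
apply: (@ev_cvg R _ (fun m => \sum_(1 <= n < M.+1) w n * (\sum_(i < m) nus n (F i))
   + t * \sum_(i < m) ddirac R k (F i)) 0).
  move=> m _; rewrite /mixt big_split /=; congr (_ + _); last by rewrite mulr_sumr.
  rewrite exchange_big /=; apply: eq_bigr => n _; by rewrite mulr_sumr.
apply: cvgD; last first.
  by apply: cvg_scale; have [_ [_ h]] := dirac_prob R k; exact: h.
apply: cvg_bigsum_in => n; rewrite mem_index_iota => hn.
apply: cvg_scale; have [_ [_ h]] := hp n hn; exact: h.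
Qed.

Lemma mixt_cube M w nus t :
  (forall n, (1 <= n <= M)%N -> nus n (~` cube_set k) = 0) ->
  mixt M w nus t (~` cube_set k) = 0.
Proof.
move=> h0; rewrite /mixt (dirac_cube R k) mulr0 addr0.
rewrite big_nat_cond big1 // => n /andP[hn _]; by rewrite h0 // mulr0.
Qed.

Lemma idx_le N M n : in_idx N M -> (1 <= n <= M)%N -> in_idx N n.
Proof.
rewrite /in_idx => /andP[_ hM] /andP[h1 h2]; rewrite h1 /=.
by case: N hM => // m hm; exact: leq_trans hm.
Qed.

Lemma mixt_in_dsum (Q : nat -> mms R -> Prop) N b M nus :
  (forall n, in_idx N n -> pyramid (Q n)) -> inA1 N b -> in_idx N M ->
  (forall n, (1 <= n <= M)%N -> Mset (Q n) k (nus n)) ->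
  Mset (dsum N b Q) k (mixt M (pad N b) nus (rseries (pad N b) M.+1)).
Proof.
move=> hQ hb hM hn.
have hprob : is_prob_on (borel_d (linf k)) (mixt M (pad N b) nus (rseries (pad N b) M.+1)).
  apply: mixt_prob.
  - by move=> n hn'; have [] := hn n hn'.
  - by move=> n _; exact: (pad_ge0 hb).
  - exact: (rseries_ge0 hb _ (ltn0Sn M)).
  - rewrite (rseries_tail hb _ (ltn0Sn M)) /Ssum; lra.
have hc0 : mixt M (pad N b) nus (rseries (pad N b) M.+1) (~` cube_set k) = 0.
  by apply: mixt_cube => n hn'; have [_ []] := hn n hn'.
split => //; split => //; split; first exact: cube_mmspace.
pose nus' n := if (1 <= n <= M)%N then nus n else ddirac R k.
exists (fun n => cube_mms k (nus' n)), (fun n (x : cube R k) => x); split.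
  move=> n hn'; split => //; rewrite /nus'; case: ifP => h.
    by have [_ []] := hn n h.
  by have [_ []] := pyramid_dirac R k _ (hQ n hn').
move=> A hA /=.
set B := sval @` A.
apply: (@ev_cvg R _ (fun m => \sum_(1 <= n < M.+1) pad N b n * nus n B +
   Tsum R N b M.+1 m * ddirac R k B) M.+1).
  move=> m hm; rewrite (@big_cat_nat _ _ _ M.+1 1 m) //=; congr (_ + _).
    by apply: eq_big_nat => n hn'; rewrite /nus' hn'.
  rewrite /Tsum mulr_suml; apply: eq_big_nat => n /andP[hn1 _].
  rewrite /nus' ifF //. by rewrite (leqNgt n M) hn1 andbF.
rewrite /mixt; apply: cvgD; first exact: cvg_cst.
rewrite (rseries_tail hb _ (ltn0Sn M)); apply: cvgM; last exact: cvg_cst.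
exact: (Tsum_cvg hb _ (ltn0Sn M)).
Qed.

End Mix.

Section Core.
Variables (R : realType) (k M : nat).
Local Notation vec := ('I_k -> R).
Local Notation prob := (is_prob_on (borel_d (linf k))).

Lemma core_est (wa wb : nat -> R) (mus nus : nat -> set vec -> R) (mu nu : set vec -> R)
  (E ta tb : R) :
  prob mu ->
  (forall n, (1 <= n < M.+1)%N -> prob (mus n)) ->
  (forall n, (1 <= n < M.+1)%N -> prob (nus n)) ->
  (forall n, (1 <= n < M.+1)%N -> psetP R k (mus n) (nus n) E) ->
  0 < E -> 0 <= ta -> 0 <= tb ->
  (forall n, (1 <= n < M.+1)%N -> 0 <= wa n) ->
  \sum_(1 <= n < M.+1) wa n <= 1 ->
  (forall B, borel_d (linf k) B -> \sum_(1 <= n < M.+1) wa n * mus n B <= mu B) ->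
  (forall B, borel_d (linf k) B -> nu B <= \sum_(1 <= n < M.+1) wb n * nus n B + tb) ->
  psetP R k mu nu (E + (\sum_(1 <= n < M.+1) `|wa n - wb n| + ta + tb)).
Proof.
move=> hmu hmus hnus hE E0 ta0 tb0 hwa hsa hlow hup.
have hS0 : 0 <= \sum_(1 <= n < M.+1) `|wa n - wb n| by apply: sumr_ge0 => *.
split; first lra.
move=> A hA.
have h1 := mu_le hmu _ _ (Uset_borel R k E A) (Uset_borel R k _ A)
  (Uset_mono R k E (E + (\sum_(1 <= n < M.+1) `|wa n - wb n| + ta + tb)) A ltac:(lra)).
have h2 := hlow _ (Uset_borel R k E A).
have h3 : \sum_(1 <= n < M.+1) wa n * (nus n A - E) <=
          \sum_(1 <= n < M.+1) wa n * mus n (Uset R k E A).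
  apply: ler_sum_nat => n hn; apply: ler_wpM2l; first exact: hwa.
  by have [_ ] := hE n hn; apply.
have h4 : \sum_(1 <= n < M.+1) wa n * (nus n A - E) =
          \sum_(1 <= n < M.+1) wa n * nus n A - (\sum_(1 <= n < M.+1) wa n) * E.
  by rewrite mulr_suml -sumrB; apply: eq_bigr => n _; rewrite mulrBr.
have h5 : \sum_(1 <= n < M.+1) wb n * nus n A <=
          \sum_(1 <= n < M.+1) wa n * nus n A + \sum_(1 <= n < M.+1) `|wa n - wb n|.
  rewrite -big_split /=; apply: ler_sum_nat => n hn.
  have h01 := mu_ge0 (hnus n hn) _ hA; have h11 := mu_le1 (hnus n hn) _ hA.
  have : (wb n - wa n) * nus n A <= `|wa n - wb n|.
    apply: le_trans (_ : `|wb n - wa n| * nus n A <= _).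
      by apply: ler_wpM2r => //; exact: ler_norm.
    by rewrite distrC; apply: ler_piMr => //.
  lra.
have h6 : (\sum_(1 <= n < M.+1) wa n) * E <= E by rewrite ler_piMl // ltW.
have h7 := hup _ hA.
lra.
Qed.

End Core.

Lemma term_le_sum (R : realType) (M n : nat) (F : nat -> R) :
  (forall i, (1 <= i < M.+1)%N -> 0 <= F i) -> (1 <= n < M.+1)%N ->
  F n <= \sum_(1 <= i < M.+1) F i.
Proof.
move=> h0 hn; rewrite (bigD1_seq n) /=; last exact: iota_uniq.
  rewrite lerDl; rewrite big_seq_cond; apply: sumr_ge0 => i /andP[hi _].
  by apply: h0; rewrite -mem_index_iota.
by rewrite mem_index_iota.
Qed.

Lemma Mset_prob (R : realType) (k : nat) (X : mms R -> Prop) mu :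
  Mset X k mu -> is_prob_on (borel_d (linf k)) mu.
Proof. by case. Qed.

Arguments decomp {R k P N a mu}. Arguments decomp_lower {R k N a mus mu M B}.
Arguments decomp_upper {R k N b nus nu M B}.
Arguments haus_approx1 {R M D S T} hT hD {x e}.
Arguments haus_approx2 {R M D S T} hS hD {y e}.
Arguments idx_le {N M n}. Arguments prok_le {R k mu nu E}.
Arguments prok_lt {R k mu nu} hmu hnu {E}. Arguments Mset_prob {R k X mu}.

Section HausDsum.
Variables (R : realType) (k : nat) (P Q : nat -> mms R -> Prop) (N N' : option nat)
  (a b : nat -> R) (M : nat).
Hypotheses (ha : inA1 N a) (hb : inA1 N' b)
  (hP : forall n, in_idx N n -> pyramid (P n)) (hQ : forall n, in_idx N' n -> pyramid (Q n))
  (hMa : in_idx N M) (hMb : in_idx N' M).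
Local Notation vec := ('I_k -> R).
Local Notation Hn n := (hausdorff (prokhorov k) (Mset (P n) k) (Mset (Q n) k)).

Lemma hM1 : (1 <= M)%N.
Proof. by case/andP: hMa. Qed.

Lemma Mset_ne (X : mms R -> Prop) : pyramid X -> Mset X k !=set0.
Proof. by move=> hX; exists (ddirac R k); exact: pyramid_dirac. Qed.
Arguments Mset_ne {X}.

Lemma dsumP_ne : Mset (dsum N a P) k !=set0.
Proof.
exists (mixt R k M (pad N a) (fun _ => ddirac R k) (rseries (pad N a) M.+1)).
apply: mixt_in_dsum => // n hn; apply: pyramid_dirac; apply: hP.
exact: idx_le hMa hn.
Qed.

Lemma dsumQ_ne : Mset (dsum N' b Q) k !=set0.
Proof.
exists (mixt R k M (pad N' b) (fun _ => ddirac R k) (rseries (pad N' b) M.+1)).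
apply: mixt_in_dsum => // n hn; apply: pyramid_dirac; apply: hQ.
exact: idx_le hMb hn.
Qed.

Lemma prok_01 (X Y : mms R -> Prop) x y : Mset X k x -> Mset Y k y ->
  0 <= prokhorov k x y <= 1.
Proof.
move=> /Mset_prob hx /Mset_prob hy.
by rewrite (@prok_ge0 _ _ _ _ hx hy) (@prok_le1 _ _ _ _ hx hy).
Qed.
Arguments prok_01 {X Y x y}.

Lemma Hn_ge0 n : (1 <= n < M.+1)%N -> 0 <= Hn n.
Proof.
move=> hn; apply: haus_ge0.
- by apply: Mset_ne; apply: hP; exact: idx_le hMa hn.
- by apply: Mset_ne; apply: hQ; exact: idx_le hMb hn.
- by move=> x y hx hy; exact: prok_01 hx hy.
Qed.

Lemma haus_dsum :
  hausdorff (prokhorov k) (Mset (dsum N a P) k) (Mset (dsum N' b Q) k) <=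
  \sum_(1 <= n < M.+1) Hn n +
  (\sum_(1 <= n < M.+1) `|pad N a n - pad N' b n| + rseries (pad N a) M.+1
    + rseries (pad N' b) M.+1).
Proof.
set ta := rseries (pad N a) M.+1; set tb := rseries (pad N' b) M.+1.
set S := \sum_(1 <= n < M.+1) `|pad N a n - pad N' b n| + ta + tb.
set Sg := \sum_(1 <= n < M.+1) Hn n.
apply/ler_addgt0Pr => eps eps0.
have hSg0 : 0 <= Sg.
  rewrite /Sg big_seq; apply: sumr_ge0 => i; rewrite mem_index_iota; exact: Hn_ge0.
set E := Sg + eps.
have E0 : 0 < E by rewrite /E; lra.
have hta : 0 <= ta by exact: (rseries_ge0 ha _ (ltn0Sn M)).
have htb : 0 <= tb by exact: (rseries_ge0 hb _ (ltn0Sn M)).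
have hEn : forall n, (1 <= n < M.+1)%N -> Hn n + eps <= E.
  move=> n hn; rewrite /E lerD2r; apply: term_le_sum hn => i hi; exact: Hn_ge0.
have hsa : \sum_(1 <= n < M.+1) pad N a n <= 1 by exact: (Ssum_le1 ha M.+1).
have hsb : \sum_(1 <= n < M.+1) pad N' b n <= 1 by exact: (Ssum_le1 hb M.+1).
apply: (@le_trans _ _ (E + S)); last by rewrite /E; lra.
apply: haus_ub.
- exact: dsumP_ne.
- exact: dsumQ_ne.
- by move=> x y hx hy; exact: prok_01 hx hy.
- move=> x hx; have [mus [hmus hconv]] := decomp hP hx.
  have hch : forall n, exists y, (1 <= n < M.+1)%N ->
      Mset (Q n) k y /\ prokhorov k (mus n) y < Hn n + eps.
    move=> n; case: (boolP (1 <= n < M.+1)%N) => hn; last by exists (ddirac R k).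
    have hne := Mset_ne (hQ _ (idx_le hMb hn)).
    have hD : forall x y, Mset (P n) k x -> Mset (Q n) k y -> 0 <= prokhorov k x y <= 1.
      by move=> x' y' hx' hy'; exact: prok_01 hx' hy'.
    have := haus_approx1 hne hD (hmus n (idx_le hMa hn)) eps0.
    by case=> y hy hlt; exists y.
  have [nus hnus] := choice hch.
  exists (mixt R k M (pad N' b) nus tb).
    by apply: mixt_in_dsum => // n hn; exact: (hnus n hn).1.
  have hnu : Mset (dsum N' b Q) k (mixt R k M (pad N' b) nus tb).
    by apply: mixt_in_dsum => // n hn; exact: (hnus n hn).1.
  apply: prok_le.
  apply: (@core_est R k M (pad N a) (pad N' b) mus nus) => //.
  + exact: Mset_prob hx.
  + by move=> n hn; exact: Mset_prob (hmus n (idx_le hMa hn)).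
  + by move=> n hn; exact: Mset_prob (hnus n hn).1.
  + move=> n hn; apply: (prok_lt (Mset_prob (hmus n (idx_le hMa hn)))
       (Mset_prob (hnus n hn).1)).
    exact: lt_le_trans (hnus n hn).2 (hEn n hn).
  + by move=> n _; exact: (pad_ge0 ha).
  + move=> B hB; apply: (decomp_lower ha hM1 _ (hconv B hB)) => n hn.
    exact: mu_ge0 (Mset_prob (hmus n hn)) _ hB.
  + move=> B hB; rewrite /mixt lerD2l.
    by apply: ler_piMr => //; exact: dirac_le1.
- move=> y hy; have [nus [hnus hconv]] := decomp hQ hy.
  have hch : forall n, exists x, (1 <= n < M.+1)%N ->
      Mset (P n) k x /\ prokhorov k x (nus n) < Hn n + eps.
    move=> n; case: (boolP (1 <= n < M.+1)%N) => hn; last by exists (ddirac R k).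
    have hne := Mset_ne (hP _ (idx_le hMa hn)).
    have hD : forall x y, Mset (P n) k x -> Mset (Q n) k y -> 0 <= prokhorov k x y <= 1.
      by move=> x' y' hx' hy'; exact: prok_01 hx' hy'.
    have := haus_approx2 hne hD (hnus n (idx_le hMb hn)) eps0.
    by case=> x hx hlt; exists x.
  have [mus hmus] := choice hch.
  have hmu : Mset (dsum N a P) k (mixt R k M (pad N a) mus ta).
    by apply: mixt_in_dsum => // n hn; exact: (hmus n hn).1.
  exists (mixt R k M (pad N a) mus ta) => //.
  apply: prok_le.
  apply: (@core_est R k M (pad N a) (pad N' b) mus nus) => //.
  + exact: Mset_prob hmu.
  + by move=> n hn; exact: Mset_prob (hmus n hn).1.
  + by move=> n hn; exact: Mset_prob (hnus n (idx_le hMb hn)).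
  + move=> n hn; apply: (prok_lt (Mset_prob (hmus n hn).1)
       (Mset_prob (hnus n (idx_le hMb hn)))).
    exact: lt_le_trans (hmus n hn).2 (hEn n hn).
  + by move=> n _; exact: (pad_ge0 ha).
  + move=> B hB; rewrite /mixt lerDl.
    by apply: mulr_ge0 => //; exact: dirac_ge0.
  + move=> B hB; apply: (decomp_upper hb hM1 _ (hconv B hB)) => n hn.
    have hp := Mset_prob (hnus n hn).
    by rewrite (mu_ge0 hp _ hB) (mu_le1 hp _ hB).
Qed.

End HausDsum.

Section Final.
Variable R : realType.

Definition wk (k : nat) : R := 2 ^- k * (k.*2%:R)^-1.

Lemma wk_ge0 k : 0 <= wk k.
Proof. by rewrite /wk mulr_ge0 // invr_ge0 // exprn_ge0. Qed.

Lemma geom_sum K : \sum_(1 <= k < K.+1) (2 ^- k : R) = 1 - 2 ^- K.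
Proof.
elim: K => [|K IH]; first by rewrite big_geq // expr0 invr1 subrr.
rewrite big_nat_recr //= IH exprS invfM; lra.
Qed.

Lemma wk_le k : (1 <= k)%N -> wk k <= 2 ^- k * 2^-1.
Proof.
move=> hk; rewrite /wk ler_wpM2l // ?invr_ge0 ?exprn_ge0 //.
rewrite lef_pV2 ?posrE ?ltr0n //; last by rewrite double_gt0.
by rewrite ler_nat -addnn -[2%N]/(1 + 1)%N leq_add.
Qed.

Lemma sum_wk K : \sum_(1 <= k < K) wk k <= 2^-1.
Proof.
case: K => [|K]; first by rewrite big_geq.
apply: (@le_trans _ _ (\sum_(1 <= k < K.+1) 2 ^- k * 2^-1)).
  by apply: ler_sum_nat => k /andP[hk _]; exact: wk_le.
rewrite -mulr_suml geom_sum.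
have h : 0 <= (2 ^- K : R) by rewrite invr_ge0 exprn_ge0.
lra.
Qed.

Lemma psum_step (f : nat -> R) : (forall k, 0 <= f k) ->
  forall K, \sum_(1 <= k < K) f k <= \sum_(1 <= k < K.+1) f k.
Proof.
move=> h0 [|K]; first by rewrite !big_geq.
rewrite [X in _ <= X]big_nat_recr //=; have := h0 K.+1; lra.
Qed.

Lemma psum_bnd (H : nat -> R) : (forall k, 0 <= H k <= 1) ->
  forall K, \sum_(1 <= k < K) wk k * H k <= 2^-1.
Proof.
move=> hH K; apply: le_trans (sum_wk K); apply: ler_sum_nat => k _.
have /andP[h0 h1] := hH k; apply: ler_piMr => //; exact: wk_ge0.
Qed.

Lemma rho_cvg (H : nat -> R) : (forall k, 0 <= H k <= 1) ->
  forall K, \sum_(1 <= k < K) wk k * H k <= limn (fun K => \sum_(1 <= k < K) wk k * H k).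
Proof.
move=> hH; apply: (nd_le_lim _ (2^-1)); last exact: psum_bnd.
apply: psum_step => k; have /andP[h0 _] := hH k; apply: mulr_ge0 => //; exact: wk_ge0.
Qed.

End Final.

Local Close Scope classical_set_scope.

Theorem corollary3p15 (R : realType) (N N' : option nat) (a b : nat -> R)
  (P Q : nat -> mms R -> Prop) (M : nat) :
  inA1 N a -> inA1 N' b ->
  (forall n, in_idx N n -> pyramid (P n)) ->
  (forall n, in_idx N' n -> pyramid (Q n)) ->
  in_idx N M -> in_idx N' M ->
  rho (dsum N a P) (dsum N' b Q) <=
    \sum_(1 <= n < M.+1) rho (P n) (Q n) + 2^-1 * l1dist N a N' b
    + 2^-1 * rseries (pad N a) M.+1 + 2^-1 * rseries (pad N' b) M.+1.
Proof.
move=> ha hb hP hQ hMa hMb.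
have hM1 : (1 <= M)%N by case/andP: hMa.
pose Hd k := hausdorff (@prokhorov R k) (Mset (dsum N a P) k) (Mset (dsum N' b Q) k).
pose Hn n k := hausdorff (@prokhorov R k) (Mset (P n) k) (Mset (Q n) k).
set ta := rseries (pad N a) M.+1; set tb := rseries (pad N' b) M.+1.
set S0 := \sum_(1 <= n < M.+1) `|pad N a n - pad N' b n|.
have hta : 0 <= ta by exact: (rseries_ge0 ha _ (ltn0Sn M)).
have htb : 0 <= tb by exact: (rseries_ge0 hb _ (ltn0Sn M)).
have hS00 : 0 <= S0 by apply: sumr_ge0 => *.
have hHd : forall k, 0 <= Hd k <= 1.
  move=> k; rewrite /Hd; apply/andP; split.
    apply: haus_ge0; [exact: (dsumP_ne R k P N a M ha hP hMa) |
      exact: (dsumQ_ne R k Q N' b M hb hQ hMb) | by move=> x y hx hy; exact: (prok_01 _ _ _ _ _ _ hx hy)].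
  apply: haus_le1; [exact: (dsumP_ne R k P N a M ha hP hMa) |
      exact: (dsumQ_ne R k Q N' b M hb hQ hMb) | by move=> x y hx hy; exact: (prok_01 _ _ _ _ _ _ hx hy)].
have hHn : forall n, (1 <= n < M.+1)%N -> forall k, 0 <= Hn n k <= 1.
  move=> n hn k; rewrite /Hn; apply/andP; split.
    exact: (Hn_ge0 R k P Q N N' M hP hQ hMa hMb n hn).
  have hPn := hP n (idx_le hMa hn); have hQn := hQ n (idx_le hMb hn).
  apply: haus_le1; [exact: (Mset_ne R k _ hPn) | exact: (Mset_ne R k _ hQn) |
    by move=> x y hx hy; exact: (prok_01 _ _ _ _ _ _ hx hy)].
have hk : forall k, Hd k <= \sum_(1 <= n < M.+1) Hn n k + (S0 + ta + tb).
  by move=> k; exact: (haus_dsum R k P Q N N' a b M ha hb hP hQ hMa hMb).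
have hl1 : S0 <= l1dist N a N' b.
  rewrite /l1dist /rseries /S0.
  pose v m := \sum_(1 <= i < m) `|pad N a i - pad N' b i|.
  have hv : forall i, `|pad N a i - pad N' b i| <= pad N a i + pad N' b i.
    move=> i; have := pad_ge0 ha i; have := pad_ge0 hb i.
    by move=> h1 h2; apply: le_trans (ler_normB _ _) _; rewrite (ger0_norm h1) (ger0_norm h2).
  apply: (nd_le_lim v 2); first by apply: psum_step => *.
  move=> m; apply: (@le_trans _ _ (Ssum R N a m + Ssum R N' b m)).
    by rewrite /v /Ssum -big_split /=; apply: ler_sum_nat => i _; exact: hv.
  by have := Ssum_le1 ha m; have := Ssum_le1 hb m; lra.
have hrho : rho (dsum N a P) (dsum N' b Q) <=
    \sum_(1 <= n < M.+1) rho (P n) (Q n) + 2^-1 * (S0 + ta + tb).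
  rewrite /rho /rseries.
  have hstep : forall K, \sum_(1 <= k < K) wk R k * Hd k <= \sum_(1 <= k < K.+1) wk R k * Hd k.
    apply: psum_step => k; have /andP[h0 _] := hHd k; apply: mulr_ge0 => //; exact: wk_ge0.
  have hbnd := psum_bnd _ _ hHd.
  apply: (lim_le_ev _ _ _ 0 (nd_bounded_cvg _ (2^-1) hstep hbnd)).
  move=> K _.
    apply: (@le_trans _ _ (\sum_(1 <= k < K) wk R k * (\sum_(1 <= n < M.+1) Hn n k + (S0 + ta + tb)))).
      apply: ler_sum_nat => k _; apply: ler_wpM2l; first exact: wk_ge0.
      exact: hk.
    rewrite -/(wk R _).
    have -> : \sum_(1 <= k < K) wk R k * (\sum_(1 <= n < M.+1) Hn n k + (S0 + ta + tb)) =
       \sum_(1 <= n < M.+1) (\sum_(1 <= k < K) wk R k * Hn n k) +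
       (\sum_(1 <= k < K) wk R k) * (S0 + ta + tb).
      rewrite mulr_suml -exchange_big /= -big_split /=; apply: eq_bigr => k _.
      by rewrite mulrDr mulr_sumr.
    apply: lerD.
      rewrite big_seq [X in _ <= X]big_seq; apply: ler_sum => n; rewrite mem_index_iota => hn.
      exact: (rho_cvg _ _ (hHn n hn)).
    by apply: ler_wpM2r; [lra | exact: sum_wk].
lra.
Qed.
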